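(* Let $\mathcal{H}_A$ and $\mathcal{H}_B$ be finite-dimensional Hilbert spaces. On $\mathcal{H}_A$ let $X_A=\{e^A_i\}$ and $Y_A=\{f^A_j\}$ be two orthonormal bases, and on $\mathcal{H}_B$ let $X_B=\{e^B_k\}$ and $Y_B=\{f^B_l\}$ be two orthonormal bases. Let $X_{AB}=\{e^A_i\otimes e^B_k\}_{i,k}$ and $Y_{AB}=\{f^A_j\otimes f^B_l\}_{j,l}$ be the corresponding product bases of $\mathcal{H}_A\otimes\mathcal{H}_B$. Fix weights $\lambda,\mu>0$, and suppose $c_A(\lambda,\mu),c_B(\lambda,\mu)\in\mathbb{R}$ satisfy $$\lambda H(X_A|\rho_A)+\mu H(Y_A|\rho_A)\ge c_A(\lambda,\mu)\quad\text{for all density matrices }\rho_A \text{ on }\mathcal{H}_A,$$ $$\lambda H(X_B|\rho_B)+\mu H(Y_B|\rho_B)\ge c_B(\lambda,\mu)\quad\text{for all density matrices }\rho_B \text{ on }\mathcal{H}_B.$$ Then $$\lambda H(X_{AB}|\rho_{AB})+\mu H(Y_{AB}|\rho_{AB})\ge c_A(\lambda,\mu)+c_B(\lambda,\mu)$$ for all density matrices $\rho_{AB}$ on $\mathcal{H}_A\otimes\mathcal{H}_B$. Moreover, if $c_A(\lambda,\mu)$ and $c_B(\lambda,\mu)$ are the optimal (largest possible) such constants, i.e. $c_A(\lambda,\mu)=\inf_{\rho_A}[\lambda H(X_A|\rho_A)+\mu H(Y_A|\rho_A)]$ and likewise for $B$, then $$\inf_{\rho_{AB}}\big[\lambda H(X_{AB}|\rho_{AB})+\mu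 H(Y_{AB}|\rho_{AB})\big]=c_A(\lambda,\mu)+c_B(\lambda,\mu).$$
   Context: A density matrix is a positive semidefinite operator of trace one. For an orthonormal basis $X=\{e_i\}$ of a finite-dimensional Hilbert space and a density matrix $\rho$, the outcome distribution is $p_i=\langle e_i|\rho|e_i\rangle$ and $H(X|\rho):=-\sum_i p_i\log p_i$ (Shannon entropy, with $0\log 0=0$ and a fixed logarithm base $>1$). *)

(* Defs.v *)
(* real numbers with ln; complex numbers built as pairs of reals.
   A d-dimensional Hilbert space is modelled as C^d, vectors as nat -> C
   (only indices < d matter), operators as nat -> nat -> C. *)
From Stdlib Require Import Reals.
Open Scope R_scope.

Record C := mkC { re : R ; im : R }.
Definition C0 : C := mkC 0 0.
Definition C1 : C := mkC 1 0.
Definition Cadd (x y : C) : C := mkC (re x + re y) (im x + im y).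
Definition Cmul (x y : C) : C :=
  mkC (re x * re y - im x * im y) (re x * im y + im x * re y).
Definition Cconj (x : C) : C := mkC (re x) (- im x).

Fixpoint csum (n : nat) (f : nat -> C) : C :=
  match n with O => C0 | S k => Cadd (csum k f) (f k) end.
Fixpoint rsum (n : nat) (f : nat -> R) : R :=
  match n with O => 0 | S k => rsum k f + f k end.

Definition vec := nat -> C.
Definition mat := nat -> nat -> C.

Definition inner (n : nat) (u v : vec) : C := csum n (fun i => Cmul (Cconj (u i)) (v i)).
Definition matvec (n : nat) (M : mat) (v : vec) : vec := fun i => csum n (fun j => Cmul (M i j) (v j)).

Definition density (n : nat) (rho : mat) : Prop :=
  (forall i j, (i < n)%nat -> (j < n)%nat -> rho j i = Cconj (rho i j)) /\
  (forall v : vec, 0 <= re (inner n v (matvec n rho v))) /\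
  csum n (fun i => rho i i) = C1.

Definition onb (n : nat) (e : nat -> vec) : Prop :=
  forall i j, (i < n)%nat -> (j < n)%nat ->
    inner n (e i) (e j) = if Nat.eqb i j then C1 else C0.

Definition prob (n : nat) (e : nat -> vec) (rho : mat) (i : nat) : R :=
  re (inner n (e i) (matvec n rho (e i))).

Definition plogp (b x : R) : R := if Rle_dec x 0 then 0 else x * (ln x / ln b).

Definition Hent (b : R) (n : nat) (e : nat -> vec) (rho : mat) : R :=
  - rsum n (fun i => plogp b (prob n e rho i)).

(* tensor product C^nA (x) C^nB = C^(nA*nB), index (a,c) |-> a*nB + c;
   product basis vector with index i*nB+k is e_i (x) f_k *)
Definition prodbasis (nB : nat) (e f : nat -> vec) : nat -> vec :=
  fun m a => Cmul (e (Nat.div m nB) (Nat.div a nB)) (f (Nat.modulo m nB) (Nat.modulo a nB)).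

Definition is_inf (S : R -> Prop) (m : R) : Prop :=
  (forall x, S x -> m <= x) /\ (forall m', (forall x, S x -> m' <= x) -> m' <= m).

Definition urvals (b lam mu : R) (n : nat) (X Y : nat -> vec) : R -> Prop :=
  fun x => exists rho, density n rho /\ x = lam * Hent b n X rho + mu * Hent b n Y rho.

(* Main.v *)
From Pilot Require Import Defs.
From Stdlib Require Import Reals Lra Lia FunctionalExtensionality.
From mathcomp Require ssreflect ssrfun ssrbool eqtype ssrnat seq fintype bigop ssralg matrix Rstruct.
From mathcomp.real_closed Require complex.
Import Pilot.Defs.
Set Bullet Behavior "Strict Subproofs".
Open Scope R_scope.

Module Compl.
Import ssreflect ssrfun ssrbool eqtype ssrnat seq fintype bigop ssralg matrix Rstruct complex.
Import GRing.Theory.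
Local Open Scope ring_scope.

Definition f (x : C) : R[i] := Complex (re x) (im x).

Lemma f_inj x y : f x = f y -> x = y.
Proof. case: x => a b; case: y => c d /= [-> ->] //. Qed.

Lemma f_mul x y : f (Cmul x y) = f x * f y.
Proof. by case: x => a b; case: y => c d. Qed.
Lemma f_add x y : f (Cadd x y) = f x + f y.
Proof. by case: x => a b; case: y => c d. Qed.

Lemma f_csum n g : f (csum n g) = \sum_(k < n) f (g k).
Proof.
elim: n => [|n IH]; first by rewrite big_ord0.
by rewrite big_ord_recr /= f_add IH.
Qed.

Lemma f_C1 : f C1 = 1. Proof. by []. Qed.
Lemma f_C0 : f C0 = 0. Proof. by []. Qed.

Lemma complete n e : onb n e -> forall a a', lt a n -> lt a' n ->
  csum n (fun k => Cmul (e k a) (Cconj (e k a'))) = if Nat.eqb a a' then C1 else C0.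
Proof.
move=> H a a' ha0 ha0'.
have ha := introT ltP ha0; have ha' := introT ltP ha0'.
pose V : 'M[R[i]]_n := \matrix_(k, b) f (Cconj (e k b)).
pose W : 'M[R[i]]_n := \matrix_(b, k) f (e k b).
have VW : V *m W = 1%:M.
  apply/matrixP => k l; rewrite !mxE.
  have := H k l (elimT ltP (ltn_ord k)) (elimT ltP (ltn_ord l)).
  rewrite /inner => E.
  under eq_bigr do rewrite !mxE -f_mul.
  rewrite -(f_csum n (fun x => Cmul (Cconj (e k x)) (e l x))) E.
  case: (PeanoNat.Nat.eqb_spec k l) => [/val_inj -> | kl]; first by rewrite eqxx.
  suff -> : (k == l) = false by [].
  by apply/negbTE/eqP => kl'; apply: kl; rewrite kl'.
have WV := mulmx1C VW.
apply: f_inj.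
have := congr1 (fun M : 'M[R[i]]_n => M (Ordinal ha) (Ordinal ha')) WV.
rewrite !mxE /= => E.
rewrite f_csum.
have -> : \sum_(k < n) f (Cmul (e k a) (Cconj (e k a'))) = (\sum_j W (Ordinal ha) j * V j (Ordinal ha')).
  by apply: eq_bigr => k _; rewrite !mxE f_mul.
rewrite E.
case: (PeanoNat.Nat.eqb_spec a a') => [aa | aa].
  subst a'; have -> : (Ordinal ha == Ordinal ha') = true by apply/eqP; apply: val_inj.
  by [].
suff -> : (Ordinal ha == Ordinal ha') = false by [].
by apply/negbTE/eqP => [[]].
Qed.
End Compl.

Lemma Ceq (x y : C) : re x = re y -> im x = im y -> x = y.
Proof. destruct x, y; simpl; intros; subst; reflexivity. Qed.

Definition Copp (x : C) : C := mkC (- re x) (- im x).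
Definition Csub (x y : C) : C := Cadd x (Copp y).

Lemma C_ring : ring_theory C0 C1 Cadd Cmul Csub Copp (@eq C).
Proof.
constructor; intros; apply Ceq; destruct x; try destruct y; try destruct z;
  unfold Cadd, Cmul, Csub, Copp, C0, C1; simpl; ring.
Qed.
Add Ring Cring : C_ring.

Lemma Cconj_add x y : Cconj (Cadd x y) = Cadd (Cconj x) (Cconj y).
Proof. apply Ceq; simpl; ring. Qed.
Lemma Cconj_mul x y : Cconj (Cmul x y) = Cmul (Cconj x) (Cconj y).
Proof. apply Ceq; simpl; ring. Qed.
Lemma Cconj_invol x : Cconj (Cconj x) = x.
Proof. apply Ceq; simpl; ring. Qed.
Lemma Cconj_C0 : Cconj C0 = C0. Proof. apply Ceq; simpl; ring. Qed.
Lemma re_add x y : re (Cadd x y) = re x + re y. Proof. reflexivity. Qed.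
Lemma im_add x y : im (Cadd x y) = im x + im y. Proof. reflexivity. Qed.

Lemma csum_ext n f g : (forall i, (i < n)%nat -> f i = g i) -> csum n f = csum n g.
Proof. induction n; simpl; intros H; [reflexivity|]. rewrite IHn by (intros; apply H; lia). rewrite H by lia; reflexivity. Qed.
Lemma csum_add n f g : csum n (fun i => Cadd (f i) (g i)) = Cadd (csum n f) (csum n g).
Proof. induction n; simpl; [apply Ceq; simpl; ring|]. rewrite IHn; ring. Qed.
Lemma csum_mull n c f : csum n (fun i => Cmul c (f i)) = Cmul c (csum n f).
Proof. induction n; simpl; [apply Ceq; simpl; ring|]. rewrite IHn; ring. Qed.
Lemma csum_mulr n c f : csum n (fun i => Cmul (f i) c) = Cmul (csum n f) c.
Proof. induction n; simpl; [apply Ceq; simpl; ring|]. rewrite IHn; ring. Qed.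
Lemma csum_zero n f : (forall i, (i < n)%nat -> f i = C0) -> csum n f = C0.
Proof. induction n; simpl; intros H; [reflexivity|]. rewrite IHn by (intros; apply H; lia). rewrite H by lia; ring. Qed.
Lemma csum_swap n m f : csum n (fun i => csum m (fun j => f i j)) = csum m (fun j => csum n (fun i => f i j)).
Proof.
induction n; simpl.
- symmetry; apply csum_zero; reflexivity.
- rewrite IHn, <- csum_add; reflexivity.
Qed.
Lemma csum_plus k m f : csum (k + m) f = Cadd (csum k f) (csum m (fun c => f (k + c)%nat)).
Proof.
induction m; simpl.
- rewrite Nat.add_0_r; ring.
- rewrite Nat.add_succ_r; simpl; rewrite IHm; ring.
Qed.
Lemma csum_split n m f : csum (n * m) f = csum n (fun a => csum m (fun c => f (a * m + c)%nat)).
Proof.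
induction n; simpl; [reflexivity|].
rewrite Nat.add_comm, csum_plus, IHn; reflexivity.
Qed.
Lemma re_csum n f : re (csum n f) = rsum n (fun i => re (f i)).
Proof. induction n; simpl; [reflexivity|]. rewrite IHn; reflexivity. Qed.
Lemma im_csum n f : im (csum n f) = rsum n (fun i => im (f i)).
Proof. induction n; simpl; [reflexivity|]. rewrite IHn; reflexivity. Qed.
Lemma Cconj_csum n f : Cconj (csum n f) = csum n (fun i => Cconj (f i)).
Proof. induction n; simpl; [apply Ceq; simpl; ring|]. rewrite Cconj_add, IHn; reflexivity. Qed.
Lemma csum_delta n (g : nat -> C) c : (c < n)%nat ->
  csum n (fun c' => Cmul (g c') (if Nat.eqb c' c then C1 else C0)) = g c.
Proof.
induction n; intros H; [lia|]. simpl.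
destruct (Nat.eq_dec c n).
- subst. rewrite Nat.eqb_refl. rewrite csum_zero. ring.
  intros i Hi. destruct (Nat.eqb_spec i n); [lia|ring].
- rewrite IHn by lia. destruct (Nat.eqb_spec n c); [lia|ring].
Qed.

Lemma rsum_ext n f g : (forall i, (i < n)%nat -> f i = g i) -> rsum n f = rsum n g.
Proof. induction n; simpl; intros H; [reflexivity|]. rewrite IHn by (intros; apply H; lia). rewrite H by lia; reflexivity. Qed.
Lemma rsum_add n f g : rsum n (fun i => f i + g i) = rsum n f + rsum n g.
Proof. induction n; simpl; [ring|]. rewrite IHn; ring. Qed.
Lemma rsum_scal n c f : rsum n (fun i => c * f i) = c * rsum n f.
Proof. induction n; simpl; [ring|]. rewrite IHn; ring. Qed.
Lemma rsum_opp n f : rsum n (fun i => - f i) = - rsum n f.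
Proof. induction n; simpl; [ring|]. rewrite IHn; ring. Qed.
Lemma rsum_zero n f : (forall i, (i < n)%nat -> f i = 0) -> rsum n f = 0.
Proof. induction n; simpl; intros H; [reflexivity|]. rewrite IHn by (intros; apply H; lia). rewrite H by lia; ring. Qed.
Lemma rsum_le n f g : (forall i, (i < n)%nat -> f i <= g i) -> rsum n f <= rsum n g.
Proof. induction n; simpl; intros H; [lra|]. specialize (IHn (fun i Hi => H i ltac:(lia))). specialize (H n ltac:(lia)). lra. Qed.
Lemma rsum_nonneg n f : (forall i, (i < n)%nat -> 0 <= f i) -> 0 <= rsum n f.
Proof. intros H. replace 0 with (rsum n (fun _ => 0)) by (apply rsum_zero; auto). apply rsum_le; auto. Qed.
Lemma rsum_swap n m f : rsum n (fun i => rsum m (fun j => f i j)) = rsum m (fun j => rsum n (fun i => f i j)).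
Proof.
induction n; simpl.
- symmetry; apply rsum_zero; reflexivity.
- rewrite IHn, <- rsum_add; reflexivity.
Qed.
Lemma rsum_plus k m f : rsum (k + m) f = rsum k f + rsum m (fun c => f (k + c)%nat).
Proof.
induction m; simpl.
- rewrite Nat.add_0_r; ring.
- rewrite Nat.add_succ_r; simpl; rewrite IHm; ring.
Qed.
Lemma rsum_split n m f : rsum (n * m) f = rsum n (fun a => rsum m (fun c => f (a * m + c)%nat)).
Proof.
induction n; simpl; [reflexivity|].
rewrite Nat.add_comm, rsum_plus, IHn; reflexivity.
Qed.
Lemma rsum_nonneg_zero n f : (forall i, (i < n)%nat -> 0 <= f i) -> rsum n f = 0 ->
  forall i, (i < n)%nat -> f i = 0.
Proof.
induction n; simpl; intros H S i Hi; [lia|].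
assert (A := rsum_nonneg n f (fun j Hj => H j ltac:(lia))).
assert (B := H n ltac:(lia)).
destruct (Nat.eq_dec i n).
- subst; lra.
- apply IHn; [intros; apply H; lia | lra | lia].
Qed.

Lemma divmod_l nB a c : (c < nB)%nat -> Nat.div (a * nB + c) nB = a.
Proof. intros H. rewrite Nat.div_add_l by lia. rewrite Nat.div_small by lia. lia. Qed.
Lemma divmod_r nB a c : (c < nB)%nat -> Nat.modulo (a * nB + c) nB = c.
Proof. intros H. rewrite Nat.add_comm, Nat.mod_add by lia. apply Nat.mod_small; lia. Qed.
Lemma idx_lt nA nB a c : (a < nA)%nat -> (c < nB)%nat -> (a * nB + c < nA * nB)%nat.
Proof. intros. nia. Qed.

Definition quad n (M : mat) (v : vec) := inner n v (matvec n M v).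

Lemma quad_dbl n M v : quad n M v =
  csum n (fun i => csum n (fun j => Cmul (Cmul (Cconj (v i)) (M i j)) (v j))).
Proof.
unfold quad, inner, matvec. apply csum_ext; intros i _.
rewrite <- csum_mull. apply csum_ext; intros; ring.
Qed.

Lemma quad_ext n M M' v v' : (forall i j, (i < n)%nat -> (j < n)%nat -> M i j = M' i j) ->
  (forall i, (i < n)%nat -> v i = v' i) -> quad n M v = quad n M' v'.
Proof.
intros HM Hv. rewrite !quad_dbl. apply csum_ext; intros i Hi; apply csum_ext; intros j Hj.
rewrite HM, !Hv by auto. reflexivity.
Qed.

Lemma conj_quad n M M' v : (forall i j, (i < n)%nat -> (j < n)%nat -> M' j i = Cconj (M i j)) ->
  Cconj (quad n M v) = quad n M' v.
Proof.
intros H. rewrite !quad_dbl, Cconj_csum.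
rewrite csum_swap. apply csum_ext; intros i Hi. rewrite Cconj_csum. apply csum_ext; intros j Hj.
rewrite !Cconj_mul, Cconj_invol, H by auto. ring.
Qed.

Lemma herm_im n M v : (forall i j, (i < n)%nat -> (j < n)%nat -> M j i = Cconj (M i j)) ->
  im (quad n M v) = 0.
Proof.
intros H. assert (E := conj_quad n M M v H).
assert (E2 := f_equal im E). simpl in E2. lra.
Qed.

Lemma sum_quad_onb n M f : onb n f ->
  csum n (fun k => quad n M (f k)) = csum n (fun c => M c c).
Proof.
intros Hf.
rewrite (csum_ext n _ (fun k => csum n (fun i => csum n (fun j => Cmul (Cmul (Cconj (f k i)) (M i j)) (f k j)))))
  by (intros; apply quad_dbl).
rewrite csum_swap. apply csum_ext; intros i Hi.
rewrite csum_swap.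
rewrite (csum_ext n _ (fun j => Cmul (M i j) (if Nat.eqb j i then C1 else C0))).
- apply csum_delta; auto.
- intros j Hj. rewrite <- (Compl.complete n f Hf j i Hj Hi).
  rewrite <- csum_mull. apply csum_ext; intros; ring.
Qed.

Definition blockB (nB : nat) (rho : mat) c c' : mat := fun a a' => rho (a * nB + c)%nat (a' * nB + c')%nat.
Definition condB nA nB rho (u : vec) : mat := fun c c' => quad nA (blockB nB rho c c') u.
Definition blockA (nB : nat) (rho : mat) a a' : mat := fun c c' => rho (a * nB + c)%nat (a' * nB + c')%nat.
Definition condA nB rho (v : vec) : mat := fun a a' => quad nB (blockA nB rho a a') v.
Definition kron (nB : nat) (u v : vec) : vec := fun m => Cmul (u (Nat.div m nB)) (v (Nat.modulo m nB)).

Definition Q4V nA nB rho (V : vec) := csum nA (fun a => csum nB (fun c => csum nA (fun a' => csum nB (fun c' =>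
   Cmul (Cmul (Cconj (V (a * nB + c)%nat)) (rho (a * nB + c)%nat (a' * nB + c')%nat)) (V (a' * nB + c')%nat))))).
Definition Q4 nA nB rho (u v : vec) := csum nA (fun a => csum nB (fun c => csum nA (fun a' => csum nB (fun c' =>
   Cmul (Cmul (Cmul (Cconj (u a)) (Cconj (v c))) (rho (a * nB + c)%nat (a' * nB + c')%nat)) (Cmul (u a') (v c')))))).

Lemma quad_split4 nA nB rho V : quad (nA * nB) rho V = Q4V nA nB rho V.
Proof.
rewrite quad_dbl, csum_split. unfold Q4V.
apply csum_ext; intros a Ha; apply csum_ext; intros c Hc.
rewrite csum_split. reflexivity.
Qed.

Lemma quad_kron nA nB rho u v : quad (nA * nB) rho (kron nB u v) = Q4 nA nB rho u v.
Proof.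
rewrite quad_split4. unfold Q4V, Q4, kron.
apply csum_ext; intros a Ha; apply csum_ext; intros c Hc;
apply csum_ext; intros a' Ha'; apply csum_ext; intros c' Hc'.
rewrite !divmod_l, !divmod_r by auto. rewrite Cconj_mul. ring.
Qed.

Lemma push2 n m x y (g : nat -> nat -> C) :
  Cmul (Cmul x (csum n (fun a => csum m (g a)))) y =
  csum n (fun a => csum m (fun b => Cmul (Cmul x (g a b)) y)).
Proof.
rewrite <- csum_mull, <- csum_mulr. apply csum_ext; intros a _.
rewrite <- csum_mull, <- csum_mulr. apply csum_ext; intros; reflexivity.
Qed.

Lemma quad_condB nA nB rho u v : quad nB (condB nA nB rho u) v = Q4 nA nB rho u v.
Proof.
rewrite quad_dbl. unfold condB.
transitivity (csum nB (fun c => csum nB (fun c' => csum nA (fun a => csum nA (fun a' =>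
  Cmul (Cmul (Cmul (Cconj (u a)) (Cconj (v c))) (rho (a * nB + c)%nat (a' * nB + c')%nat)) (Cmul (u a') (v c'))))))).
{ apply csum_ext; intros c _; apply csum_ext; intros c' _.
  rewrite quad_dbl, push2. apply csum_ext; intros a _; apply csum_ext; intros a' _.
  unfold blockB; ring. }
transitivity (csum nB (fun c => csum nA (fun a => csum nB (fun c' => csum nA (fun a' =>
  Cmul (Cmul (Cmul (Cconj (u a)) (Cconj (v c))) (rho (a * nB + c)%nat (a' * nB + c')%nat)) (Cmul (u a') (v c'))))))).
{ apply csum_ext; intros c _. apply csum_swap. }
rewrite csum_swap. unfold Q4.
apply csum_ext; intros a _; apply csum_ext; intros c _. apply csum_swap.
Qed.

Lemma quad_condA nA nB rho u v : quad nA (condA nB rho v) u = Q4 nA nB rho u v.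
Proof.
rewrite quad_dbl. unfold condA, Q4.
apply csum_ext; intros a _.
transitivity (csum nA (fun a' => csum nB (fun c => csum nB (fun c' =>
  Cmul (Cmul (Cmul (Cconj (u a)) (Cconj (v c))) (rho (a * nB + c)%nat (a' * nB + c')%nat)) (Cmul (u a') (v c')))))).
{ apply csum_ext; intros a' _. rewrite quad_dbl, push2.
  apply csum_ext; intros c _; apply csum_ext; intros c' _. unfold blockA; ring. }
apply csum_swap.
Qed.

Lemma lnb_pos b : 1 < b -> 0 < ln b.
Proof. intros H. rewrite <- ln_1. apply ln_increasing; lra. Qed.
Lemma ln_le_sub1 y : 0 < y -> ln y <= y - 1.
Proof. intros H. assert (E := exp_ineq1_le (ln y)). rewrite exp_ln in E by auto. lra. Qed.
Lemma plogp_eq b x : 0 <= x -> plogp b x = x * (ln x / ln b).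
Proof. intros H. unfold plogp. destruct (Rle_dec x 0); [assert (x = 0) by lra; subst; ring | reflexivity]. Qed.

Lemma rsum_ge_term n f l : (forall i, (i < n)%nat -> 0 <= f i) -> (l < n)%nat -> f l <= rsum n f.
Proof.
induction n; intros H Hl; [lia|]. simpl.
assert (A := rsum_nonneg n f (fun j Hj => H j ltac:(lia))).
destruct (Nat.eq_dec l n).
- subst; lra.
- assert (B := H n ltac:(lia)). assert (f l <= rsum n f) by (apply IHn; [intros; apply H; lia|lia]). lra.
Qed.

Lemma gibbs_term b q t s : 1 < b -> 0 <= q -> q <= t -> q <= s -> 0 <= t -> 0 <= s ->
  q * (ln t / ln b) + q * (ln s / ln b) + (q - t * s) / ln b <= plogp b q.
Proof.
intros Hb Hq Ht Hs Ht0 Hs0. assert (lb := lnb_pos b Hb).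
rewrite plogp_eq by auto.
destruct (Req_dec q 0) as [->|Hq0].
- replace (0 * (ln t / ln b) + 0 * (ln s / ln b) + (0 - t * s) / ln b) with (- (t * s / ln b)) by (field; lra).
  replace (0 * (ln 0 / ln b)) with 0 by ring.
  assert (0 <= t * s / ln b) by (apply Rmult_le_pos; [nra | left; apply Rinv_0_lt_compat; auto]). lra.
- assert (q > 0) by lra.
  assert (L := ln_le_sub1 (t * s / q) ltac:(apply Rdiv_lt_0_compat; nra)).
  unfold Rdiv in L. rewrite ln_mult, ln_mult, ln_Rinv in L by (try apply Rinv_0_lt_compat; nra).
  assert (K : q * (ln t + ln s - ln q) <= t * s - q).
  { replace (t * s - q) with (q * (t * s * / q - 1)) by (field; lra). apply Rmult_le_compat_l; lra. }
  apply (Rmult_le_reg_r (ln b)); auto.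
  replace ((q * (ln t / ln b) + q * (ln s / ln b) + (q - t * s) / ln b) * ln b) with
    (q * ln t + q * ln s + q - t * s) by (field; lra).
  replace (q * (ln q / ln b) * ln b) with (q * ln q) by (field; lra). lra.
Qed.

Lemma rsum_lin n f g c d : rsum n (fun l => (f l - c * g l) / d) = (rsum n f - c * rsum n g) / d.
Proof. induction n; simpl. - unfold Rdiv; ring. - rewrite IHn. unfold Rdiv; ring. Qed.

Lemma rsum_scalr n f c : rsum n (fun i => f i * c) = rsum n f * c.
Proof. induction n; simpl. - ring. - rewrite IHn. ring. Qed.

Lemma gibbs b nA nB (Q : nat -> nat -> R) (t s : nat -> R) : 1 < b ->
  (forall i l, (i < nA)%nat -> (l < nB)%nat -> 0 <= Q i l) ->
  (forall i, (i < nA)%nat -> rsum nB (Q i) = t i) ->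
  (forall l, (l < nB)%nat -> rsum nA (fun i => Q i l) = s l) ->
  rsum nA t = 1 -> rsum nB s = 1 ->
  rsum nA (fun i => plogp b (t i)) + rsum nB (fun l => plogp b (s l))
  <= rsum nA (fun i => rsum nB (fun l => plogp b (Q i l))).
Proof.
intros Hb HQ Ht Hs St Ss. assert (lb := lnb_pos b Hb).
assert (t0 : forall i, (i < nA)%nat -> 0 <= t i) by (intros; rewrite <- Ht by auto; apply rsum_nonneg; auto).
assert (s0 : forall l, (l < nB)%nat -> 0 <= s l) by (intros; rewrite <- Hs by auto; apply rsum_nonneg; auto).
eapply Rle_trans; [| apply rsum_le; intros i Hi; apply rsum_le; intros l Hl;
  apply (gibbs_term b (Q i l) (t i) (s l)); auto].
- apply Req_le. symmetry.
  rewrite (rsum_ext nA _ (fun i => rsum nB (fun l => Q i l * (ln (t i) / ln b)) + rsum nB (fun l => Q i l * (ln (s l) / ln b))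
     + (rsum nB (fun l => Q i l) - t i * rsum nB s) / ln b)).
  2:{ intros i Hi. rewrite !rsum_add, rsum_lin. reflexivity. }
  rewrite !rsum_add.
  rewrite (rsum_swap nA nB (fun i l => Q i l * (ln (s l) / ln b))).
  rewrite (rsum_ext nA (fun i => (rsum nB (fun l => Q i l) - t i * rsum nB s) / ln b) (fun _ => 0)).
  2:{ intros i Hi. rewrite Ss. change (rsum nB (fun l => Q i l)) with (rsum nB (Q i)). rewrite (Ht i Hi). field; lra. }
  rewrite (rsum_zero nA (fun _ => 0)) by auto. rewrite Rplus_0_r.
  f_equal.
  + apply rsum_ext; intros i Hi. rewrite plogp_eq by auto.
    rewrite (rsum_scalr nB (Q i)), Ht by auto. reflexivity.
  + apply rsum_ext; intros l Hl. rewrite plogp_eq by auto.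
    rewrite (rsum_scalr nA (fun i => Q i l)), Hs by auto. reflexivity.
- first [ apply HQ; auto
        | rewrite <- Ht by auto; apply rsum_ge_term; auto
        | rewrite <- Hs by auto; apply (rsum_ge_term nA (fun i => Q i l)); auto; intros; apply HQ; auto
        | auto ].
- first [ apply HQ; auto
        | rewrite <- Ht by auto; apply rsum_ge_term; auto
        | rewrite <- Hs by auto; apply (rsum_ge_term nA (fun i => Q i l)); auto; intros; apply HQ; auto
        | auto ].
Qed.

Lemma sumprob n f M : onb n f ->
  rsum n (fun k => re (quad n M (f k))) = re (csum n (fun c => M c c)).
Proof. intros H. rewrite <- sum_quad_onb with (f := f) by auto. rewrite re_csum. reflexivity. Qed.

Lemma quad_scal n k M v : quad n (fun i j => Cmul k (M i j)) v = Cmul k (quad n M v).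
Proof.
rewrite !quad_dbl, <- csum_mull. apply csum_ext; intros i _.
rewrite <- csum_mull. apply csum_ext; intros; ring.
Qed.

Lemma herm_diag_im n M : (forall i j, (i < n)%nat -> (j < n)%nat -> M j i = Cconj (M i j)) ->
  im (csum n (fun c => M c c)) = 0.
Proof.
intros H. rewrite im_csum. apply rsum_zero. intros i Hi.
assert (E := f_equal im (H i i Hi Hi)). simpl in E. lra.
Qed.

Lemma entropy_scale b n (p : nat -> R) t : 1 < b -> (forall k, (k < n)%nat -> 0 <= p k) -> 0 < t ->
  rsum n (fun k => plogp b (p k)) = t * rsum n (fun k => plogp b (p k / t)) + rsum n p * (ln t / ln b).
Proof.
intros Hb Hp Ht. assert (lb := lnb_pos b Hb). rewrite <- rsum_scal, <- rsum_scalr, <- rsum_add.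
apply rsum_ext; intros k Hk.
destruct (Req_dec (p k) 0) as [E|E].
- rewrite E. unfold Rdiv at 1. rewrite Rmult_0_l. unfold plogp. destruct (Rle_dec 0 0); [ring|lra].
- assert (0 < p k) by (specialize (Hp k Hk); lra).
  rewrite !plogp_eq by (try apply Rlt_le, Rdiv_lt_0_compat; lra).
  unfold Rdiv. rewrite ln_mult, ln_Rinv by (try apply Rinv_0_lt_compat; lra).
  field. lra.
Qed.

Lemma cond_bound b n f g (sigma : mat) lam mu c : 1 < b -> onb n f -> onb n g -> 0 < lam -> 0 < mu ->
  (forall i j, (i < n)%nat -> (j < n)%nat -> sigma j i = Cconj (sigma i j)) ->
  (forall v, 0 <= re (quad n sigma v)) ->
  (forall rho, density n rho -> lam * Hent b n f rho + mu * Hent b n g rho >= c) ->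
  - lam * rsum n (fun k => plogp b (re (quad n sigma (f k))))
  - mu * rsum n (fun k => plogp b (re (quad n sigma (g k))))
  >= - (lam + mu) * plogp b (re (csum n (fun c => sigma c c))) + re (csum n (fun c => sigma c c)) * c.
Proof.
intros Hb Hf Hg Hl Hm Hh Hp Hyp.
set (t := re (csum n (fun c => sigma c c))).
assert (Sf := sumprob n f sigma Hf). assert (Sg := sumprob n g sigma Hg). fold t in Sf, Sg.
assert (t0 : 0 <= t) by (rewrite <- Sf; apply rsum_nonneg; intros; apply Hp).
destruct (Req_dec t 0) as [T|T].
- rewrite T. unfold plogp at 3. destruct (Rle_dec 0 0); [|lra].
  assert (Zf := rsum_nonneg_zero n _ (fun i _ => Hp (f i)) ltac:(rewrite Sf; exact T)).
  assert (Zg := rsum_nonneg_zero n _ (fun i _ => Hp (g i)) ltac:(rewrite Sg; exact T)).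
  rewrite !(rsum_zero n (fun k => plogp b _)). lra.
  + intros i Hi. rewrite Zg by auto. unfold plogp. destruct (Rle_dec 0 0); lra.
  + intros i Hi. rewrite Zf by auto. unfold plogp. destruct (Rle_dec 0 0); lra.
- assert (tp : 0 < t) by lra.
  set (k := mkC (/ t) 0).
  set (rho := fun i j => Cmul k (sigma i j)).
  assert (Hd : density n rho).
  { split; [|split].
    - intros i j Hi Hj. unfold rho. rewrite Hh by auto. apply Ceq; simpl; ring.
    - intros v. change (inner n v (matvec n rho v)) with (quad n rho v). unfold rho. rewrite quad_scal. simpl. rewrite Rmult_0_l, Rminus_0_r.
      apply Rmult_le_pos; [left; apply Rinv_0_lt_compat; auto | apply Hp].
    - unfold rho. rewrite csum_mull. apply Ceq; simpl.
      + rewrite (herm_diag_im n sigma Hh). fold t. field. lra.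
      + rewrite (herm_diag_im n sigma Hh). fold t. ring. }
  assert (Pr : forall e i, prob n e rho i = re (quad n sigma (e i)) / t).
  { intros e i. unfold prob. change (inner n (e i) (matvec n rho (e i))) with (quad n rho (e i)).
    unfold rho. rewrite quad_scal. simpl. unfold Rdiv. ring. }
  specialize (Hyp rho Hd). unfold Hent in Hyp.
  rewrite (rsum_ext n (fun i => plogp b (prob n f rho i)) (fun i => plogp b (re (quad n sigma (f i)) / t))) in Hyp
    by (intros; rewrite Pr; reflexivity).
  rewrite (rsum_ext n (fun i => plogp b (prob n g rho i)) (fun i => plogp b (re (quad n sigma (g i)) / t))) in Hyp
    by (intros; rewrite Pr; reflexivity).
  rewrite (entropy_scale b n (fun k => re (quad n sigma (f k))) t Hb (fun k _ => Hp (f k)) tp).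
  rewrite (entropy_scale b n (fun k => re (quad n sigma (g k))) t Hb (fun k _ => Hp (g k)) tp).
  rewrite Sf, Sg.
  rewrite (plogp_eq b t t0).
  set (Af := rsum n (fun k0 => plogp b (re (quad n sigma (f k0)) / t))) in *.
  set (Ag := rsum n (fun k0 => plogp b (re (quad n sigma (g k0)) / t))) in *.
  assert (H1 : t * c <= t * (lam * - Af + mu * - Ag)) by (apply Rmult_le_compat_l; lra).
  nra.
Qed.

Lemma prodbasis_kron nB e f i k : (k < nB)%nat -> prodbasis nB e f (i * nB + k)%nat = kron nB (e i) (f k).
Proof. intros H. extensionality a. unfold prodbasis, kron. rewrite divmod_l, divmod_r by auto. reflexivity. Qed.

Section Part1.
Variables (nA nB : nat) (rho : mat) (Hd : density (nA * nB) rho).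

Lemma herm_condB u : forall c c', (c < nB)%nat -> (c' < nB)%nat ->
  condB nA nB rho u c' c = Cconj (condB nA nB rho u c c').
Proof.
intros c c' Hc Hc'. unfold condB. symmetry. apply conj_quad.
intros a a' Ha Ha'. unfold blockB. destruct Hd as [H _]. apply H; apply idx_lt; auto.
Qed.

Lemma herm_condA v : forall a a', (a < nA)%nat -> (a' < nA)%nat ->
  condA nB rho v a' a = Cconj (condA nB rho v a a').
Proof.
intros a a' Ha Ha'. unfold condA. symmetry. apply conj_quad.
intros c c' Hc Hc'. unfold blockA. destruct Hd as [H _]. apply H; apply idx_lt; auto.
Qed.

Lemma psd_condB u : forall v, 0 <= re (quad nB (condB nA nB rho u) v).
Proof. intros v. rewrite quad_condB, <- quad_kron. destruct Hd as [_ [H _]]. apply H. Qed.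

Lemma psd_condA v : forall u, 0 <= re (quad nA (condA nB rho v) u).
Proof. intros u. rewrite quad_condA, <- quad_kron. destruct Hd as [_ [H _]]. apply H. Qed.

Lemma tr_rho : csum nA (fun a => csum nB (fun c => rho (a * nB + c)%nat (a * nB + c)%nat)) = C1.
Proof. rewrite <- (csum_split nA nB (fun m => rho m m)). destruct Hd as [_ [_ H]]. exact H. Qed.

Lemma trB e : onb nA e -> rsum nA (fun i => re (csum nB (fun c => condB nA nB rho (e i) c c))) = 1.
Proof.
intros He. rewrite <- re_csum, csum_swap.
rewrite (csum_ext nB _ (fun c => csum nA (fun a => rho (a * nB + c)%nat (a * nB + c)%nat))).
- rewrite <- csum_swap, tr_rho. reflexivity.
- intros c Hc. unfold condB. rewrite sum_quad_onb by auto. reflexivity.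
Qed.

Lemma trA v : onb nB v -> rsum nB (fun l => re (csum nA (fun a => condA nB rho (v l) a a))) = 1.
Proof.
intros Hv. rewrite <- re_csum, csum_swap.
rewrite (csum_ext nA _ (fun a => csum nB (fun c => rho (a * nB + c)%nat (a * nB + c)%nat))).
- rewrite tr_rho. reflexivity.
- intros a Ha. unfold condA. rewrite sum_quad_onb by auto. reflexivity.
Qed.

Lemma Hent_XX b e f : Hent b (nA * nB) (prodbasis nB e f) rho =
  - rsum nA (fun i => rsum nB (fun k => plogp b (re (quad nB (condB nA nB rho (e i)) (f k))))).
Proof.
unfold Hent. f_equal. rewrite rsum_split. apply rsum_ext; intros i Hi; apply rsum_ext; intros k Hk.
unfold prob. change (inner (nA * nB) ?x (matvec (nA * nB) rho ?x)) with (quad (nA * nB) rho x).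
rewrite prodbasis_kron, quad_kron, quad_condB by auto. reflexivity.
Qed.

Lemma Hent_YY b e f : Hent b (nA * nB) (prodbasis nB e f) rho =
  - rsum nB (fun l => rsum nA (fun j => plogp b (re (quad nA (condA nB rho (f l)) (e j))))).
Proof.
unfold Hent. f_equal. rewrite rsum_split, rsum_swap. apply rsum_ext; intros l Hl; apply rsum_ext; intros j Hj.
unfold prob. change (inner (nA * nB) ?x (matvec (nA * nB) rho ?x)) with (quad (nA * nB) rho x).
rewrite prodbasis_kron, quad_kron, quad_condA by auto. reflexivity.
Qed.

End Part1.

Lemma sum_bound n (F : nat -> R) lam mu (X Y T : nat -> R) c :
  (forall i, (i < n)%nat -> - lam * X i - mu * Y i >= - (lam + mu) * T i + F i * c) ->
  rsum n F = 1 ->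
  - lam * rsum n X - mu * rsum n Y >= - (lam + mu) * rsum n T + c.
Proof.
intros H S.
assert (L := rsum_le n (fun i => - (lam + mu) * T i + F i * c) (fun i => - lam * X i - mu * Y i)
   (fun i Hi => Rge_le _ _ (H i Hi))).
rewrite rsum_add, rsum_scal, rsum_scalr, S in L.
unfold Rminus in L. rewrite rsum_add in L.
try rewrite (rsum_ext n (fun i => - lam * X i) (fun i => (- lam) * X i)) in L by auto.
rewrite (rsum_ext n (fun i => - (mu * Y i)) (fun i => (- mu) * Y i)) in L by (intros; ring).
rewrite !rsum_scal in L. lra.
Qed.

Lemma part1 (b : R) (hb : 1 < b) (nA nB : nat)
  (XA YA XB YB : nat -> vec)
  (hXA : onb nA XA) (hYA : onb nA YA) (hXB : onb nB XB) (hYB : onb nB YB)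
  (lam mu : R) (hlam : 0 < lam) (hmu : 0 < mu) (cA cB : R) :
  (forall rhoA, density nA rhoA -> lam * Hent b nA XA rhoA + mu * Hent b nA YA rhoA >= cA) ->
  (forall rhoB, density nB rhoB -> lam * Hent b nB XB rhoB + mu * Hent b nB YB rhoB >= cB) ->
  forall rhoAB, density (nA * nB) rhoAB ->
     lam * Hent b (nA * nB) (prodbasis nB XA XB) rhoAB
     + mu * Hent b (nA * nB) (prodbasis nB YA YB) rhoAB >= cA + cB.
Proof.
intros HA HB rho Hd.
rewrite (Hent_XX nA nB rho b XA XB), (Hent_YY nA nB rho b YA YB).
set (t := fun i => re (csum nB (fun c => condB nA nB rho (XA i) c c))).
set (s := fun l => re (csum nA (fun a => condA nB rho (YB l) a a))).
set (Q := fun i l => re (quad nB (condB nA nB rho (XA i)) (YB l))).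
assert (EQ : forall i l, re (quad nA (condA nB rho (YB l)) (XA i)) = Q i l).
{ intros i l. unfold Q. rewrite quad_condA, quad_condB. reflexivity. }
assert (H1 := sum_bound nA t lam mu
   (fun i => rsum nB (fun k => plogp b (re (quad nB (condB nA nB rho (XA i)) (XB k)))))
   (fun i => rsum nB (fun l => plogp b (Q i l)))
   (fun i => plogp b (t i)) cB).
assert (H2 := sum_bound nB s lam mu
   (fun l => rsum nA (fun i => plogp b (Q i l)))
   (fun l => rsum nA (fun j => plogp b (re (quad nA (condA nB rho (YB l)) (YA j)))))
   (fun l => plogp b (s l)) cA).
assert (H3 := gibbs b nA nB Q t s hb).
lapply H1; [clear H1; intro H1|].
2:{ intros i Hi. apply (cond_bound b nB XB YB); auto.
    - apply herm_condB; auto.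
    - apply psd_condB; auto. }
lapply H1; [clear H1; intro H1|]. 2:{ apply trB; auto. }
lapply H2; [clear H2; intro H2|].
2:{ intros l Hl.
    rewrite (rsum_ext nA (fun i => plogp b (Q i l)) (fun i => plogp b (re (quad nA (condA nB rho (YB l)) (XA i)))))
      by (intros; rewrite EQ; reflexivity).
    apply (cond_bound b nA XA YA); auto.
    - apply herm_condA; auto.
    - apply psd_condA; auto. }
lapply H2; [clear H2; intro H2|]. 2:{ apply trA; auto. }
lapply H3; [clear H3; intro H3|]. 2:{ intros; apply psd_condB; auto. }
lapply H3; [clear H3; intro H3|].
2:{ intros i Hi. unfold Q, t. rewrite sumprob by auto. reflexivity. }
lapply H3; [clear H3; intro H3|].
2:{ intros l Hl. unfold s. rewrite <- (sumprob nA XA) by auto. apply rsum_ext; intros; rewrite EQ; reflexivity. }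
lapply H3; [clear H3; intro H3|]. 2:{ apply trB; auto. }
lapply H3; [clear H3; intro H3|]. 2:{ apply trA; auto. }
rewrite (rsum_swap nB nA (fun l i => plogp b (Q i l))) in H2.
set (XX := rsum nA (fun i => rsum nB (fun k => plogp b (re (quad nB (condB nA nB rho (XA i)) (XB k)))))) in *.
set (YY := rsum nB (fun l => rsum nA (fun j => plogp b (re (quad nA (condA nB rho (YB l)) (YA j)))))) in *.
set (XY := rsum nA (fun i => rsum nB (fun l => plogp b (Q i l)))) in *.
set (Ts := rsum nA (fun i => plogp b (t i))) in *.
set (Ss := rsum nB (fun l => plogp b (s l))) in *.
assert ((lam + mu) * (Ts + Ss) <= (lam + mu) * XY) by (apply Rmult_le_compat_l; lra).
lra.
Qed.

Lemma quad_S n M v : quad (S n) M v =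
  Cadd (Cadd (Cadd (quad n M v) (Cmul (csum n (fun i => Cmul (Cconj (v i)) (M i n))) (v n)))
    (Cmul (Cconj (v n)) (csum n (fun j => Cmul (M n j) (v j)))))
    (Cmul (Cmul (Cconj (v n)) (M n n)) (v n)).
Proof.
rewrite !quad_dbl. simpl.
rewrite csum_add, <- csum_mulr, <- csum_mull.
rewrite (csum_ext n (fun i => Cmul (Cmul (Cconj (v n)) (M n i)) (v i)) (fun j => Cmul (Cconj (v n)) (Cmul (M n j) (v j))))
  by (intros; ring).
ring.
Qed.

Lemma csum_sub n f g : csum n (fun i => Csub (f i) (g i)) = Csub (csum n f) (csum n g).
Proof. induction n; simpl; [apply Ceq; simpl; ring|]. rewrite IHn; ring. Qed.

Lemma quad_zero n M v : (forall i, (i < n)%nat -> v i = C0) -> quad n M v = C0.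
Proof. intros H. rewrite quad_dbl. apply csum_zero; intros i Hi. apply csum_zero; intros j Hj. rewrite (H i Hi), (H j Hj). rewrite Cconj_C0. ring. Qed.

Definition extw n (w' : nat -> vec) (L : vec) : nat -> vec :=
  fun k => if Nat.ltb k n then (fun a => if Nat.ltb a n then w' k a else C0) else L.

Lemma extw_sum n w' L a a' :
  csum (S n) (fun k => Cmul (extw n w' L k a) (Cconj (extw n w' L k a'))) =
  Cadd (if Nat.ltb a n then if Nat.ltb a' n then csum n (fun k => Cmul (w' k a) (Cconj (w' k a'))) else C0 else C0)
       (Cmul (L a) (Cconj (L a'))).
Proof.
simpl. unfold extw at 3 4. rewrite Nat.ltb_irrefl. f_equal.
rewrite (csum_ext n _ (fun k => Cmul (if Nat.ltb a n then w' k a else C0) (Cconj (if Nat.ltb a' n then w' k a' else C0)))).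
2:{ intros k Hk. unfold extw. destruct (Nat.ltb_spec k n); [reflexivity|lia]. }
destruct (Nat.ltb a n), (Nat.ltb a' n); try reflexivity; apply csum_zero; intros; rewrite ?Cconj_C0; ring.
Qed.

Lemma herm_real n M : (forall i j, (i < S n)%nat -> (j < S n)%nat -> M j i = Cconj (M i j)) ->
  M n n = mkC (re (M n n)) 0.
Proof.
intros H. assert (E := f_equal im (H n n ltac:(lia) ltac:(lia))). simpl in E.
apply Ceq; simpl; lra.
Qed.

Definition Herm n (M : mat) := forall i j, (i < n)%nat -> (j < n)%nat -> M j i = Cconj (M i j).
Definition PSD n (M : mat) := forall v, 0 <= re (quad n M v).

Lemma Herm_S n M : Herm (S n) M -> Herm n M.
Proof. intros H i j Hi Hj. apply H; lia. Qed.

Definition delta_n (n : nat) : vec := fun j => if Nat.eqb j n then C1 else C0.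

Lemma diag_nonneg n M : PSD (S n) M -> 0 <= re (M n n).
Proof.
intros H. specialize (H (delta_n n)). rewrite quad_S in H.
rewrite quad_zero in H by (intros i Hi; unfold delta_n; destruct (Nat.eqb_spec i n); [lia|reflexivity]).
rewrite (csum_zero n (fun i => Cmul (Cconj (delta_n n i)) (M i n))) in H
  by (intros i Hi; unfold delta_n; destruct (Nat.eqb_spec i n); [lia|]; rewrite Cconj_C0; ring).
rewrite (csum_zero n (fun j => Cmul (M n j) (delta_n n j))) in H
  by (intros i Hi; unfold delta_n; destruct (Nat.eqb_spec i n); [lia|]; ring).
unfold delta_n in H. rewrite Nat.eqb_refl in H. simpl in H. lra.
Qed.

Lemma PSD_S n M : PSD (S n) M -> PSD n M.
Proof.
intros H v. set (v' := fun i => if Nat.ltb i n then v i else C0).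
specialize (H v'). rewrite quad_S in H.
assert (E : quad n M v' = quad n M v).
{ apply quad_ext; auto. intros i Hi. unfold v'. destruct (Nat.ltb_spec i n); [reflexivity|lia]. }
assert (Z : v' n = C0) by (unfold v'; rewrite Nat.ltb_irrefl; reflexivity).
rewrite E, Z, Cconj_C0 in H.
replace (re _) with (re (quad n M v)) in H by (f_equal; ring). exact H.
Qed.


Lemma degenerate n M : Herm (S n) M -> PSD (S n) M -> re (M n n) = 0 ->
  forall j, (j < n)%nat -> M n j = C0.
Proof.
intros Hh Hp D.
set (Sm := csum n (fun j => Cmul (M n j) (Cconj (M n j)))).
set (sg := rsum n (fun j => re (M n j) * re (M n j) + im (M n j) * im (M n j))).
assert (reS : re Sm = sg) by (unfold Sm; rewrite re_csum; apply rsum_ext; intros; simpl; ring).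
assert (imS : im Sm = 0) by (unfold Sm; rewrite im_csum; apply rsum_zero; intros; simpl; ring).
assert (sg0 : 0 <= sg) by (apply rsum_nonneg; intros; nra).
set (v0 := fun j => Cconj (M n j)).
assert (Mnn : M n n = mkC 0 0) by (rewrite (herm_real n M Hh), D; reflexivity).
assert (Q : forall x, 0 <= re (quad n M v0) - 2 * x * sg).
{ intros x. set (v := fun j => if Nat.ltb j n then v0 j else mkC (- x) 0).
  specialize (Hp v). rewrite quad_S in Hp.
  assert (E1 : quad n M v = quad n M v0) by
    (apply quad_ext; auto; intros i Hi; unfold v; destruct (Nat.ltb_spec i n); [reflexivity|lia]).
  assert (E2 : csum n (fun i => Cmul (Cconj (v i)) (M i n)) = Sm).
  { unfold Sm. apply csum_ext; intros i Hi. unfold v, v0. destruct (Nat.ltb_spec i n); [|lia].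
    rewrite Cconj_invol. rewrite (Hh i n) by lia. rewrite Cconj_invol. reflexivity. }
  assert (E3 : csum n (fun j => Cmul (M n j) (v j)) = Sm).
  { unfold Sm. apply csum_ext; intros i Hi. unfold v, v0. destruct (Nat.ltb_spec i n); [reflexivity|lia]. }
  rewrite E1, E2, E3, Mnn in Hp. unfold v in Hp. rewrite Nat.ltb_irrefl in Hp.
  simpl in Hp. rewrite reS, imS in Hp. lra. }
assert (sgz : sg = 0).
{ destruct (Req_dec sg 0) as [|Hs]; auto.
  specialize (Q ((re (quad n M v0) + 1) / (2 * sg))).
  replace (re (quad n M v0) - 2 * ((re (quad n M v0) + 1) / (2 * sg)) * sg) with (-1) in Q by (field; lra).
  lra. }
intros j Hj.
assert (Z : re (M n j) * re (M n j) + im (M n j) * im (M n j) = 0).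
{ apply (rsum_nonneg_zero n (fun j => re (M n j) * re (M n j) + im (M n j) * im (M n j))); [intros; nra | exact sgz | exact Hj]. }
apply Ceq; simpl; nra.
Qed.

Lemma sqrt_inv_sq d : 0 < d -> / sqrt d * / sqrt d = / d.
Proof. intros H. rewrite <- Rinv_mult. rewrite sqrt_sqrt by lra. reflexivity. Qed.

Lemma chol n : forall M, Herm n M -> PSD n M ->
  exists w : nat -> vec, forall a a', (a < n)%nat -> (a' < n)%nat ->
    M a a' = csum n (fun k => Cmul (w k a) (Cconj (w k a'))).
Proof.
induction n as [|n IH]; intros M Hh Hp.
{ exists (fun _ _ => C0). intros; lia. }
set (d := re (M n n)).
assert (Mnn : M n n = mkC d 0) by (apply herm_real; auto).
assert (d0 : 0 <= d) by (apply diag_nonneg; auto).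
assert (HMn : forall i, (i < n)%nat -> M n i = Cconj (M i n)) by (intros; apply Hh; lia).
destruct (Req_dec d 0) as [D|D].
- assert (Z := degenerate n M Hh Hp D).
  destruct (IH M (Herm_S n M Hh) (PSD_S n M Hp)) as [w' Hw'].
  exists (extw n w' (fun _ => C0)). intros a a' Ha Ha'. rewrite extw_sum.
  destruct (Nat.ltb_spec a n), (Nat.ltb_spec a' n).
  + rewrite <- Hw' by auto. rewrite Cconj_C0. ring.
  + assert (a' = n) by lia. subst a'. rewrite (Hh n a) by lia. rewrite Z by auto. rewrite Cconj_C0; ring.
  + assert (a = n) by lia. subst a. rewrite Z by auto. rewrite Cconj_C0; ring.
  + assert (a = n) by lia. assert (a' = n) by lia. subst. rewrite Mnn, D. rewrite Cconj_C0. apply Ceq; simpl; ring.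
- assert (dp : 0 < d) by lra.
  set (k := mkC (/ d) 0).
  set (B := fun i j => Csub (M i j) (Cmul (Cmul (M i n) (M n j)) k)).
  assert (HB : Herm n B).
  { intros i j Hi Hj. unfold B. rewrite (Hh i j), (HMn i), (Hh n j) by lia.
    apply Ceq; simpl; ring. }
  assert (PB : PSD n B).
  { intros v.
    set (Sm := csum n (fun j => Cmul (M n j) (v j))).
    set (A := csum n (fun i => Cmul (Cconj (v i)) (M i n))).
    set (z := Cmul (Copp k) Sm).
    set (v' := fun i => if Nat.ltb i n then v i else z).
    assert (EB : quad n B v = Csub (quad n M v) (Cmul (Cmul A k) Sm)).
    { rewrite !quad_dbl. unfold A. rewrite <- csum_mulr, <- csum_mulr, <- csum_sub.
      apply csum_ext; intros i Hi. unfold Sm. rewrite <- csum_mull, <- csum_sub.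
      apply csum_ext; intros j Hj. unfold B. ring. }
    specialize (Hp v'). rewrite quad_S in Hp.
    assert (E1 : quad n M v' = quad n M v) by
      (apply quad_ext; auto; intros i Hi; unfold v'; destruct (Nat.ltb_spec i n); [reflexivity|lia]).
    assert (E2 : csum n (fun i => Cmul (Cconj (v' i)) (M i n)) = A).
    { unfold A. apply csum_ext; intros i Hi. unfold v'. destruct (Nat.ltb_spec i n); [reflexivity|lia]. }
    assert (E3 : csum n (fun j => Cmul (M n j) (v' j)) = Sm).
    { unfold Sm. apply csum_ext; intros i Hi. unfold v'. destruct (Nat.ltb_spec i n); [reflexivity|lia]. }
    assert (E4 : v' n = z) by (unfold v'; rewrite Nat.ltb_irrefl; reflexivity).
    rewrite E1, E2, E3, E4, Mnn in Hp.
    assert (Z : Cadd Sm (Cmul (mkC d 0) z) = C0).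
    { unfold z, k. apply Ceq; simpl; field; lra. }
    replace (Cadd (Cadd (Cadd (quad n M v) (Cmul A z)) (Cmul (Cconj z) Sm)) (Cmul (Cmul (Cconj z) (mkC d 0)) z))
      with (Cadd (Cadd (quad n M v) (Cmul A z)) (Cmul (Cconj z) (Cadd Sm (Cmul (mkC d 0) z)))) in Hp by ring.
    rewrite Z in Hp. rewrite EB. replace (Csub (quad n M v) (Cmul (Cmul A k) Sm)) with
      (Cadd (Cadd (quad n M v) (Cmul A z)) (Cmul (Cconj z) C0)) by (unfold z; ring).
    exact Hp. }
  destruct (IH B HB PB) as [w' Hw'].
  set (r := / sqrt d).
  assert (rr : r * r = / d) by (apply sqrt_inv_sq; auto).
  exists (extw n w' (fun a => Cmul (M a n) (mkC r 0))). intros a a' Ha Ha'. rewrite extw_sum.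
  replace (Cmul (Cmul (M a n) (mkC r 0)) (Cconj (Cmul (M a' n) (mkC r 0)))) with
    (Cmul (Cmul (M a n) (Cconj (M a' n))) k).
  2:{ unfold k. rewrite <- rr. apply Ceq; simpl; ring. }
  destruct (Nat.ltb_spec a n), (Nat.ltb_spec a' n).
  + rewrite <- Hw' by auto. unfold B. rewrite <- (HMn a') by auto. ring.
  + assert (a' = n) by lia. subst a'. rewrite Mnn. unfold k. apply Ceq; simpl; field; lra.
  + assert (a = n) by lia. subst a. rewrite <- (HMn a') by auto. rewrite Mnn. unfold k. apply Ceq; simpl; field; lra.
  + assert (a = n) by lia. assert (a' = n) by lia. subst. rewrite Mnn. unfold k. apply Ceq; simpl; field; lra.
Qed.

Definition prodrho (nB : nat) (rA rB : mat) : mat :=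
  fun m m' => Cmul (rA (Nat.div m nB) (Nat.div m' nB)) (rB (Nat.modulo m nB) (Nat.modulo m' nB)).

Lemma idx_bounds nA nB m : (m < nA * nB)%nat -> (Nat.div m nB < nA)%nat /\ (Nat.modulo m nB < nB)%nat.
Proof.
intros H. assert (nB <> 0%nat) by (intro; subst; lia). split.
- apply Nat.div_lt_upper_bound; lia.
- apply Nat.mod_upper_bound; auto.
Qed.

Lemma prod_quad nA nB rA rB u v :
  quad nB (condB nA nB (prodrho nB rA rB) u) v = Cmul (quad nA rA u) (quad nB rB v).
Proof.
rewrite <- quad_scal. apply quad_ext; auto. intros c c' Hc Hc'.
unfold condB. rewrite (quad_ext nA _ (fun a a' => Cmul (rB c c') (rA a a')) u u).
- rewrite quad_scal. ring.
- intros a a' _ _. unfold blockB, prodrho. rewrite !divmod_l, !divmod_r by auto. ring.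
- auto.
Qed.

Definition Q5 nA nB nk (Z : nat -> nat -> nat -> nat -> nat -> C) :=
  csum nA (fun a => csum nB (fun c => csum nA (fun a' => csum nB (fun c' => csum nk (fun k => Z a c a' c' k))))).

Lemma Q5_perm nA nB nk Z : Q5 nA nB nk Z =
  csum nk (fun k => csum nB (fun c => csum nB (fun c' => csum nA (fun a => csum nA (fun a' => Z a c a' c' k))))).
Proof.
unfold Q5.
transitivity (csum nA (fun a => csum nB (fun c => csum nA (fun a' => csum nk (fun k => csum nB (fun c' => Z a c a' c' k)))))).
{ apply csum_ext; intros; apply csum_ext; intros; apply csum_ext; intros; apply csum_swap. }
transitivity (csum nA (fun a => csum nB (fun c => csum nk (fun k => csum nA (fun a' => csum nB (fun c' => Z a c a' c' k)))))).
{ apply csum_ext; intros; apply csum_ext; intros; apply csum_swap. }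
transitivity (csum nA (fun a => csum nk (fun k => csum nB (fun c => csum nA (fun a' => csum nB (fun c' => Z a c a' c' k)))))).
{ apply csum_ext; intros; apply csum_swap. }
rewrite csum_swap. apply csum_ext; intros k _.
transitivity (csum nB (fun c => csum nA (fun a => csum nA (fun a' => csum nB (fun c' => Z a c a' c' k))))).
{ apply csum_swap. }
apply csum_ext; intros c _.
transitivity (csum nA (fun a => csum nB (fun c' => csum nA (fun a' => Z a c a' c' k)))).
{ apply csum_ext; intros; apply csum_swap. }
apply csum_swap.
Qed.

Lemma prod2 n n' X m Y : Cmul (Cmul (csum n X) m) (csum n' Y) =
  csum n (fun a => csum n' (fun a' => Cmul (Cmul (X a) m) (Y a'))).
Proof.
rewrite <- csum_mulr, <- csum_mulr. apply csum_ext; intros a _.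
rewrite <- csum_mull. apply csum_ext; intros; ring.
Qed.

Lemma prod_density nA nB rA rB : density nA rA -> density nB rB -> density (nA * nB) (prodrho nB rA rB).
Proof.
intros [HA [PA TA]] [HB [PB TB]]. split; [|split].
- intros m m' Hm Hm'. destruct (idx_bounds _ _ _ Hm), (idx_bounds _ _ _ Hm').
  unfold prodrho. rewrite HA, HB by auto. rewrite Cconj_mul. reflexivity.
- intros V. change (inner (nA * nB) V (matvec (nA * nB) (prodrho nB rA rB) V)) with (quad (nA * nB) (prodrho nB rA rB) V).
  destruct (chol nA rA HA PA) as [w Hw].
  set (u := fun k c => csum nA (fun a => Cmul (Cconj (w k a)) (V (a * nB + c)%nat))).
  assert (E : quad (nA * nB) (prodrho nB rA rB) V = csum nA (fun k => quad nB rB (u k))).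
  { rewrite quad_split4. unfold Q4V.
    set (Z := fun a c a' c' k => Cmul (Cmul (Cmul (w k a) (Cconj (V (a * nB + c)%nat))) (rB c c'))
                                   (Cmul (Cconj (w k a')) (V (a' * nB + c')%nat))).
    transitivity (Q5 nA nB nA Z).
    { unfold Q5. apply csum_ext; intros a Ha; apply csum_ext; intros c Hc;
      apply csum_ext; intros a' Ha'; apply csum_ext; intros c' Hc'.
      unfold prodrho. rewrite !divmod_l, !divmod_r by auto. rewrite Hw by auto.
      rewrite <- csum_mulr, <- csum_mull, <- csum_mulr. apply csum_ext; intros k _. unfold Z. ring. }
    rewrite Q5_perm. apply csum_ext; intros k _.
    rewrite quad_dbl. apply csum_ext; intros c _; apply csum_ext; intros c' _.
    unfold u. rewrite Cconj_csum, prod2. apply csum_ext; intros a _; apply csum_ext; intros a' _.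
    unfold Z. rewrite Cconj_mul, Cconj_invol. ring. }
  rewrite E, re_csum. apply rsum_nonneg. intros; apply PB.
- rewrite csum_split.
  rewrite (csum_ext nA _ (fun a => Cmul (rA a a) (csum nB (fun c => rB c c)))).
  + rewrite TB, csum_mulr, TA. apply Ceq; simpl; ring.
  + intros a Ha. rewrite <- csum_mull. apply csum_ext; intros c Hc.
    unfold prodrho. rewrite divmod_l, divmod_r by auto. reflexivity.
Qed.

Lemma plogp_mul b p q : 1 < b -> 0 <= p -> 0 <= q -> plogp b (p * q) = q * plogp b p + p * plogp b q.
Proof.
intros Hb Hp Hq. rewrite !plogp_eq by (auto; nra).
destruct (Req_dec p 0) as [->|Pp]; [ring|].
destruct (Req_dec q 0) as [->|Pq]; [ring|].
rewrite ln_mult by lra. unfold Rdiv. ring.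
Qed.

Lemma ent_prod b nA nB (pA pB : nat -> R) : 1 < b ->
  (forall i, (i < nA)%nat -> 0 <= pA i) -> (forall k, (k < nB)%nat -> 0 <= pB k) ->
  rsum nA pA = 1 -> rsum nB pB = 1 ->
  rsum nA (fun i => rsum nB (fun k => plogp b (pA i * pB k))) =
  rsum nA (fun i => plogp b (pA i)) + rsum nB (fun k => plogp b (pB k)).
Proof.
intros Hb HA HB SA SB.
rewrite (rsum_ext nA _ (fun i => plogp b (pA i) + pA i * rsum nB (fun k => plogp b (pB k)))).
- rewrite rsum_add, rsum_scalr, SA. ring.
- intros i Hi. rewrite (rsum_ext nB _ (fun k => pB k * plogp b (pA i) + pA i * plogp b (pB k))).
  + rewrite rsum_add, rsum_scalr, SB, rsum_scal. ring.
  + intros k Hk. apply plogp_mul; auto.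
Qed.

Lemma prob_sum n e rho : onb n e -> density n rho -> rsum n (fun i => prob n e rho i) = 1.
Proof.
intros He [_ [_ T]]. unfold prob. change (fun i => re (inner n (e i) (matvec n rho (e i)))) with
  (fun i => re (quad n rho (e i))). rewrite sumprob by auto. rewrite T. reflexivity.
Qed.

Lemma prob_nonneg n e rho i : density n rho -> 0 <= prob n e rho i.
Proof. intros [_ [P _]]. apply P. Qed.

Lemma Hent_prod b nA nB e f rA rB : 1 < b -> onb nA e -> onb nB f -> density nA rA -> density nB rB ->
  Hent b (nA * nB) (prodbasis nB e f) (prodrho nB rA rB) = Hent b nA e rA + Hent b nB f rB.
Proof.
intros Hb He Hf DA DB.
rewrite Hent_XX.
rewrite (rsum_ext nA _ (fun i => rsum nB (fun k => plogp b (prob nA e rA i * prob nB f rB k)))).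
- rewrite ent_prod; auto.
  + unfold Hent. ring.
  + intros; apply prob_nonneg; auto.
  + intros; apply prob_nonneg; auto.
  + apply prob_sum; auto.
  + apply prob_sum; auto.
- intros i Hi. apply rsum_ext; intros k Hk. rewrite prod_quad.
  destruct DA as [HA _]. destruct DB as [HB _].
  unfold prob. change (inner nA (e i) (matvec nA rA (e i))) with (quad nA rA (e i)).
  change (inner nB (f k) (matvec nB rB (f k))) with (quad nB rB (f k)).
  simpl. rewrite (herm_im nA rA), (herm_im nB rB) by auto. f_equal. ring.
Qed.

Theorem proposition1 (b : R) (hb : 1 < b) (nA nB : nat)
  (XA YA XB YB : nat -> vec)
  (hXA : onb nA XA) (hYA : onb nA YA) (hXB : onb nB XB) (hYB : onb nB YB)
  (lam mu : R) (hlam : 0 < lam) (hmu : 0 < mu) (cA cB : R) :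
  ((forall rhoA, density nA rhoA -> lam * Hent b nA XA rhoA + mu * Hent b nA YA rhoA >= cA) ->
   (forall rhoB, density nB rhoB -> lam * Hent b nB XB rhoB + mu * Hent b nB YB rhoB >= cB) ->
   forall rhoAB, density (nA * nB) rhoAB ->
     lam * Hent b (nA * nB) (prodbasis nB XA XB) rhoAB
     + mu * Hent b (nA * nB) (prodbasis nB YA YB) rhoAB >= cA + cB)
  /\
  (is_inf (urvals b lam mu nA XA YA) cA ->
   is_inf (urvals b lam mu nB XB YB) cB ->
   is_inf (urvals b lam mu (nA * nB) (prodbasis nB XA XB) (prodbasis nB YA YB)) (cA + cB)).
Proof.
split.
- apply part1; auto.
- intros [LA GA] [LB GB]. split.
  + intros x [rho [Hd ->]]. apply Rge_le. apply part1; auto.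
    * intros rA DA. apply Rle_ge. apply LA. exists rA; auto.
    * intros rB DB. apply Rle_ge. apply LB. exists rB; auto.
  + intros m Hm.
    assert (K : forall xA, urvals b lam mu nA XA YA xA -> m - cB <= xA).
    { intros xA [rA [DA ->]].
      assert (m - (lam * Hent b nA XA rA + mu * Hent b nA YA rA) <= cB).
      { apply GB. intros xB [rB [DB ->]].
        assert (V := Hm (lam * Hent b (nA * nB) (prodbasis nB XA XB) (prodrho nB rA rB)
                       + mu * Hent b (nA * nB) (prodbasis nB YA YB) (prodrho nB rA rB))).
        rewrite !Hent_prod in V by auto.
        assert (m <= lam * (Hent b nA XA rA + Hent b nB XB rB) + mu * (Hent b nA YA rA + Hent b nB YB rB)).
        { apply V. exists (prodrho nB rA rB). split; [apply prod_density; auto|].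
          rewrite !Hent_prod by auto. reflexivity. }
        lra. }
      lra. }
    assert (m - cB <= cA) by (apply GA; auto). lra.
Qed.
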